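(* Let $n>2$ and $V=\mathbb{F}_2^n$. The number of elementary abelian regular subgroups $R$ of $\mathrm{Sym}(V)$ such that $R\cap T$ has index $4$ in $T$ is $$t_n=\frac{(2^{n-2}-1)(2^{n-1}-1)(2^n-1)}{3}.$$
   Context: $T=\{\sigma_v:v\in V\}\le\mathrm{Sym}(V)$ is the group of translations $\sigma_v:x\mapsto x+v$. *)

(* Defs.v *)
From HB Require Import structures.
From mathcomp Require Import all_boot all_order all_algebra all_fingroup all_solvable.
Set Implicit Arguments. Unset Strict Implicit. Unset Printing Implicit Defensive.
Import GRing.Theory.
Local Open Scope group_scope.

Notation V n := ('rV['F_2]_n).

Definition transl (n : nat) (v : V n) : {perm V n} :=
  perm (addIr v).

Definition transl_group (n : nat) : {set {perm V n}} :=
  [set transl v | v in [set: V n]].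

Definition regular_on (n : nat) (R : {set {perm V n}}) : bool :=
  [transitive R, on [set: V n] | 'P] && [forall x : V n, 'C_R[x | 'P] == 1].

(* Main.v *)
Require Import Defs.
From HB Require Import structures.
From mathcomp Require Import all_boot all_order all_algebra all_fingroup all_solvable.
From mathcomp Require Import ring zify.
Set Implicit Arguments. Unset Strict Implicit. Unset Printing Implicit Defensive.
Import GRing.Theory.
Local Open Scope ring_scope.

Lemma F2c (x : 'F_2) : x = 0 \/ x = 1.
Proof. case: x => m Hm; case: m Hm => [|[|m]] Hm; [left|right|by []]; exact: val_inj. Qed.
Lemma F2two : (1 + 1 : 'F_2) = 0. Proof. exact: val_inj. Qed.
Lemma F22 : (2 : 'F_2) = 0. Proof. exact: val_inj. Qed.
Lemma F23 : (3 : 'F_2) = 1. Proof. exact: val_inj. Qed.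
Lemma F24 : (4 : 'F_2) = 0. Proof. exact: val_inj. Qed.
Lemma F25 : (5 : 'F_2) = 1. Proof. exact: val_inj. Qed.
Lemma F26 : (6 : 'F_2) = 0. Proof. exact: val_inj. Qed.
Lemma F27 : (7 : 'F_2) = 1. Proof. exact: val_inj. Qed.
Lemma F28 : (8 : 'F_2) = 0. Proof. exact: val_inj. Qed.
Ltac f2 := ring: F22 F23 F24 F25 F26 F27 F28.
Lemma F2one : (1 : 'F_2) != 0. Proof. by []. Qed.

Lemma VVxx n (u : V n) : u + u = 0.
Proof. apply/matrixP => i j; rewrite !mxE; ring: F2two. Qed.

Lemma oppV n (u : V n) : - u = u.
Proof. by apply/eqP; rewrite eq_sym -addr_eq0 VVxx. Qed.
Lemma addV_eq0 n (u w : V n) : (u + w == 0) = (u == w).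
Proof. by rewrite addr_eq0 oppV. Qed.
Lemma addV_cancel n (x u w : V n) : x + u + w = x -> u = w.
Proof. by rewrite -addrA -{2}(addr0 x) => /addrI /eqP; rewrite addV_eq0 => /eqP. Qed.

Definition fa n (a : 'cV['F_2]_n) (x : V n) : 'F_2 := (x *m a) 0 0.
Arguments fa : simpl never.

Lemma faD n (a : 'cV_n) x y : fa a (x + y) = fa a x + fa a y.
Proof. by rewrite /fa mulmxDl mxE. Qed.
Lemma fa0 n (a : 'cV_n) : fa a 0 = 0.
Proof. by rewrite /fa mul0mx mxE. Qed.
Lemma faZ n (a : 'cV_n) c x : fa a (c *: x) = c * fa a x.
Proof. by rewrite /fa -scalemxAl mxE. Qed.
Lemma faDc n (a b : 'cV_n) x : fa (a + b) x = fa a x + fa b x.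
Proof. by rewrite /fa mulmxDr mxE. Qed.
Lemma faZc n (a : 'cV_n) c x : fa (c *: a) x = c * fa a x.
Proof. by rewrite /fa -scalemxAr mxE. Qed.
Lemma fa0c n x : fa (0 : 'cV_n) x = 0.
Proof. by rewrite /fa mulmx0 mxE. Qed.
Lemma fa_delta n (a : 'cV_n) i : fa a (delta_mx 0 i) = a i 0.
Proof. by rewrite /fa -rowE mxE. Qed.
Lemma fa_inj n (a b : 'cV_n) : (forall x, fa a x = fa b x) -> a = b.
Proof.
move=> H; apply/matrixP => i j; rewrite (ord1 j) -!fa_delta; exact: H.
Qed.

Definition Bf n (a b : 'cV_n) (v x : V n) : 'F_2 := fa a v * fa b x + fa b v * fa a x.

Lemma BfD n (a b : 'cV_n) v x y : Bf a b v (x + y) = Bf a b v x + Bf a b v y.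
Proof. rewrite /Bf !faD; ring. Qed.
Lemma BfDl n (a b : 'cV_n) v w x : Bf a b (v + w) x = Bf a b v x + Bf a b w x.
Proof. rewrite /Bf !faD; ring. Qed.
Lemma BfZ n (a b : 'cV_n) v c x : Bf a b v (c *: x) = c * Bf a b v x.
Proof. rewrite /Bf !faZ; ring. Qed.
Lemma BfZl n (a b : 'cV_n) v c x : Bf a b (c *: v) x = c * Bf a b v x.
Proof. rewrite /Bf !faZ; ring. Qed.
Lemma Bfsym n (a b : 'cV_n) v x : Bf a b v x = Bf a b x v.
Proof. rewrite /Bf; ring. Qed.
Lemma Bfvv n (a b : 'cV_n) v : Bf a b v v = 0.
Proof. rewrite /Bf; ring: F2two. Qed.
Lemma Bf0 n (a b : 'cV_n) v : Bf a b v 0 = 0.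
Proof. by rewrite /Bf !fa0; ring. Qed.

Definition dd n (a b : 'cV_n) (d : V n) : V n :=
  if (fa a d == 0) && (fa b d == 0) then d else 0.
Lemma fa_dd1 n (a b : 'cV_n) d : fa a (dd a b d) = 0.
Proof. rewrite /dd; case: ifP => [/andP[/eqP //]|]; by rewrite fa0. Qed.
Lemma fa_dd2 n (a b : 'cV_n) d : fa b (dd a b d) = 0.
Proof. rewrite /dd; case: ifP => [/andP[_ /eqP //]|]; by rewrite fa0. Qed.
Lemma Bf_dd n (a b : 'cV_n) d v : Bf a b v (dd a b d) = 0.
Proof. by rewrite /Bf fa_dd1 fa_dd2; ring. Qed.

Definition gfun n (a b : 'cV_n) (d : V n) (v x : V n) : V n :=
  x + v + Bf a b v x *: dd a b d.

Lemma gfunK n (a b : 'cV_n) d v : involutive (gfun a b d v).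
Proof.
move=> x; rewrite /gfun BfD BfD BfZ Bf_dd Bfvv.
apply/matrixP => i j; rewrite !mxE; ring: F2two.
Qed.

Definition gperm n (a b : 'cV_n) (d : V n) (v : V n) : {perm V n} :=
  perm (inv_inj (gfunK a b d v)).

Lemma gpermE n (a b : 'cV_n) d v x : gperm a b d v x = x + v + Bf a b v x *: dd a b d.
Proof. by rewrite permE. Qed.

Lemma gperm0 n (a b : 'cV_n) d v : gperm a b d v 0 = v.
Proof. by rewrite gpermE Bf0 scale0r add0r addr0. Qed.

Lemma gperm_inj n (a b : 'cV_n) d : injective (gperm a b d).
Proof. by move=> u v H; rewrite -(gperm0 a b d u) H gperm0. Qed.

Lemma gpermM n (a b : 'cV_n) d u v :
  (gperm a b d u * gperm a b d v)%g = gperm a b d (u + v + Bf a b u v *: dd a b d).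
Proof.
apply/permP => x; rewrite permM !gpermE !BfD BfDl BfDl BfZ BfZl Bf_dd.
rewrite (Bfsym _ _ (dd a b d)) Bf_dd (Bfsym _ _ v u).
apply/matrixP => i j; rewrite !mxE; ring: F2two.
Qed.

Lemma gpermVV n (a b : 'cV_n) d u : (gperm a b d u * gperm a b d u)%g = 1%g.
Proof. by rewrite gpermM Bfvv scale0r addr0 VVxx; apply/permP => x; rewrite gpermE perm1 Bfsym Bf0 scale0r !addr0.
Qed.

Definition Rset n (a b : 'cV_n) (d : V n) : {set {perm V n}} :=
  [set gperm a b d v | v in [set: V n]].

Lemma Rset_group n (a b : 'cV_n) d : group_set (Rset a b d).
Proof.
apply/group_setP; split.
  apply/imsetP; exists 0; first by rewrite inE.
  by apply/permP => x; rewrite perm1 gpermE Bfsym Bf0 scale0r !addr0.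
move=> _ _ /imsetP[u _ ->] /imsetP[v _ ->]; rewrite gpermM.
by apply/imsetP; eexists; first by rewrite inE.
Qed.

Definition FG n (a b : 'cV_n) (d : V n) : {group {perm V n}} := Group (Rset_group a b d).
Lemma cardV n : #|{: V n}| = (2 ^ n)%N.
Proof. by rewrite card_mx card_Fp // mul1n. Qed.
Lemma cardC n : #|{: 'cV['F_2]_n}| = (2 ^ n)%N.
Proof. by rewrite card_mx card_Fp // muln1. Qed.

Definition cos n (W : {set V n}) (c : V n) : {set V n} := [set x | x + c \in W].

Definition addcl n (W : {set V n}) := 0 \in W /\ {in W &, forall x y, x + y \in W}.

Lemma card_cos n (W : {set V n}) c : #|cos W c| = #|W|.
Proof.
have -> : cos W c = [set x + c | x in W].
  apply/setP => x; rewrite inE; apply/idP/imsetP => [H|[y Hy ->]].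
    by exists (x + c) => //; rewrite -addrA VVxx addr0.
  by rewrite -addrA VVxx addr0.
by rewrite card_imset //; apply: addIr.
Qed.

Lemma cos_disj n (W : {set V n}) c1 c2 : addcl W -> c1 + c2 \notin W ->
  cos W c1 :&: cos W c2 = set0.
Proof.
move=> [_ HW] H; apply/setP => x; rewrite !inE; apply/negP => /andP[H1 H2].
move: (HW _ _ H1 H2); suff -> : x + c1 + (x + c2) = c1 + c2 by rewrite (negbTE H).
apply/matrixP => i j; rewrite !mxE; ring: F2two.
Qed.

Lemma cardsU0 (T : finType) (A B : {set T}) : A :&: B = set0 -> #|A :|: B| = (#|A| + #|B|)%N.
Proof. by move=> H; rewrite -cardsUI H cards0 addn0. Qed.

Lemma cos4_card n (W : {set V n}) p q : addcl W ->
  p \notin W -> q \notin W -> p + q \notin W ->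
  #|cos W 0 :|: cos W p :|: cos W q :|: cos W (p + q)| = (4 * #|W|)%N.
Proof.
move=> HW Hp Hq Hpq.
have E0 : forall c, c \in W -> c + 0 \in W by move=> c; rewrite addr0.
have D1 : forall c1 c2 c3, c1 + c3 \notin W -> c2 + c3 \notin W ->
   (cos W c1 :|: cos W c2) :&: cos W c3 = set0.
  move=> c1 c2 c3 h1 h2; by rewrite setIUl !cos_disj // setU0.
have D2 : forall c1 c2 c3 c4, c1 + c4 \notin W -> c2 + c4 \notin W -> c3 + c4 \notin W ->
   (cos W c1 :|: cos W c2 :|: cos W c3) :&: cos W c4 = set0.
  move=> c1 c2 c3 c4 h1 h2 h3; by rewrite setIUl D1 // cos_disj // setU0.
have e1 : forall x : V n, x + x + x = x by move=> x; rewrite VVxx add0r.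
have E1 : p + (p + q) = q by apply/matrixP => i j; rewrite !mxE; ring: F2two.
have E2 : q + (p + q) = p by apply/matrixP => i j; rewrite !mxE; ring: F2two.
rewrite cardsU0 ?D2 ?add0r ?E1 ?E2 // cardsU0 ?D1 ?add0r // cardsU0 ?cos_disj ?add0r //.
rewrite !card_cos; lia.
Qed.
Lemma F2neq0 (x : 'F_2) : x != 0 -> x = 1.
Proof. by case: (F2c x) => ->. Qed.

Lemma nz_entry n (a : 'cV['F_2]_n) : a != 0 -> exists i, a i 0 = 1.
Proof.
case: (boolP [exists i, a i 0 == 1]) => [/existsP[i /eqP H] _|H]; first by exists i.
case/eqP; apply/matrixP => i j; rewrite (ord1 j) mxE.
case: (F2c (a i 0)) => // Hi; move/existsP: H; case; by exists i; rewrite Hi.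
Qed.

Lemma neq_entry n (a b : 'cV['F_2]_n) : a != b -> exists j, a j 0 != b j 0.
Proof.
case: (boolP [exists i, a i 0 != b i 0]) => [/existsP[i H] _|H]; first by exists i.
case/eqP; apply/matrixP => i j; rewrite (ord1 j).
by apply/eqP; apply: contraR H => H; apply/existsP; exists i.
Qed.

Lemma ex10 n (a b : 'cV_n) : a != 0 -> a != b -> exists x, fa a x = 1 /\ fa b x = 0.
Proof.
move=> /nz_entry[i Hi] /neq_entry[j Hj].
case: (F2c (b i 0)) => Hbi.
  by exists (delta_mx 0 i); rewrite !fa_delta.
case: (F2c (a j 0)) => Haj.
  have Hbj : b j 0 = 1 by apply: F2neq0; rewrite -Haj eq_sym.
  exists (delta_mx 0 i + delta_mx 0 j); rewrite !faD !fa_delta Hi Hbi Haj Hbj.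
  by rewrite addr0 F2two.
have Hbj : b j 0 = 0 by case: (F2c (b j 0)) => // E; move: Hj; rewrite Haj E eqxx.
by exists (delta_mx 0 j); rewrite !fa_delta.
Qed.

Definition Kset n (a b : 'cV_n) : {set V n} := [set x | (fa a x == 0) && (fa b x == 0)].

Lemma addcl_K n (a b : 'cV_n) : addcl (Kset a b).
Proof.
split; first by rewrite inE !fa0 eqxx.
move=> x y; rewrite !inE !faD => /andP[/eqP-> /eqP->] /andP[/eqP-> /eqP->].
by rewrite addr0 eqxx.
Qed.

Lemma cardK n (a b : 'cV_n) : (2 <= n)%N -> a != 0 -> b != 0 -> a != b ->
  #|Kset a b| = (2 ^ (n - 2))%N.
Proof.
move=> hn Ha Hb Hab.
have [p [Pa Pb]] := ex10 Ha Hab.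
have [q [Qb Qa]] : exists q, fa b q = 1 /\ fa a q = 0 by apply: ex10; rewrite // eq_sym.
have hK := cos4_card (addcl_K a b) (p := p) (q := q).
rewrite !inE !faD Pa Pb Qa Qb /= in hK.
have {hK} hK := hK isT isT isT.
have Hcov : cos (Kset a b) 0 :|: cos (Kset a b) p :|: cos (Kset a b) q :|: cos (Kset a b) (p + q) = setT.
  apply/setP => y; rewrite !inE !faD !fa0 Pa Pb Qa Qb !addr0.
  by case: (F2c (fa a y)) => ->; case: (F2c (fa b y)) => ->; rewrite ?F2two ?add0r ?addr0 ?eqxx ?orbT.
rewrite Hcov cardsT cardV in hK.
have : (2 ^ n = 4 * 2 ^ (n - 2))%N by rewrite -{1}(subnK hn) expnD mulnC.
rewrite hK => /eqP; rewrite eqn_mul2l /= => /eqP //.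
Qed.
Definition valid n (t : 'cV['F_2]_n * 'cV['F_2]_n * V n) : bool :=
  [&& t.1.1 != 0, t.1.2 != 0, t.1.1 != t.1.2, t.2 != 0,
      fa t.1.1 t.2 == 0 & fa t.1.2 t.2 == 0].

Lemma dd_valid n (a b : 'cV_n) d : fa a d = 0 -> fa b d = 0 -> dd a b d = d.
Proof. by rewrite /dd => -> ->; rewrite eqxx. Qed.

Lemma FG_abelem n (a b : 'cV_n) d : abelem 2 (FG a b d).
Proof.
apply/abelemP => //; split.
  apply/centsP => _ /imsetP[u _ ->] _ /imsetP[v _ ->].
  by rewrite /commute !gpermM Bfsym [u + v]addrC.
move=> _ /imsetP[u _ ->]; by rewrite expgS expg1 gpermVV.
Qed.

Lemma gperm_1 n (a b : 'cV_n) d : gperm a b d 0 = 1%g.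
Proof. by apply/permP => x; rewrite perm1 gpermE Bfsym Bf0 scale0r !addr0. Qed.

Lemma FG_regular n (a b : 'cV_n) d : regular_on (FG a b d).
Proof.
apply/andP; split.
  apply/imsetP; exists 0; first by rewrite inE.
  apply/setP => y; rewrite inE; apply/esym/orbitP.
  by exists (gperm a b d y); [apply/imsetP; exists y; rewrite ?inE | rewrite /= apermE gperm0].
apply/forallP => x; rewrite eqEsubset sub1G andbT.
apply/subsetP => _ /setIP[/imsetP[v _ ->] /astab1P]; move=> H; have {}H : gperm a b d v x = x by exact: H.
rewrite gpermE in H.
have Hv : v = Bf a b v x *: dd a b d.
  exact: addV_cancel H.
have : Bf a b v x = 0 by rewrite {1}Hv BfZl (Bfsym _ _ (dd a b d)) Bf_dd mulr0.
by move=> H0; rewrite Hv H0 scale0r gperm_1 inE.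
Qed.

Definition transl_gs n : group_set (transl_group n).
Proof.
apply/group_setP; split.
  apply/imsetP; exists 0; first by rewrite inE.
  by apply/permP => x; rewrite perm1 permE addr0.
move=> _ _ /imsetP[u _ ->] /imsetP[v _ ->]; apply/imsetP; exists (u + v); first by rewrite inE.
by apply/permP => x; rewrite permM !permE addrA.
Qed.
Definition TG n : {group {perm V n}} := Group (transl_gs n).

Lemma transl_inj n : injective (@transl n).
Proof. by move=> u v /permP /(_ 0); rewrite !permE !add0r. Qed.

Lemma card_T n : #|transl_group n| = (2 ^ n)%N.
Proof. by rewrite card_imset ?cardsT ?cardV //; apply: transl_inj. Qed.

Lemma scale_F2_eq0 n (c : 'F_2) (d : V n) : d != 0 -> c *: d = 0 -> c = 0.
Proof. by move=> Hd /eqP; rewrite scalemx_eq0 (negbTE Hd) orbF => /eqP. Qed.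

Lemma FGT n (a b : 'cV_n) d : valid (a, b, d) ->
  FG a b d :&: transl_group n = [set transl v | v in Kset a b].
Proof.
case/and5P => Ha Hb Hab Hd /andP[/eqP Hda /eqP Hdb].
have [p [Pa Pb]] := ex10 Ha Hab.
have [q [Qb Qa]] : exists q, fa b q = 1 /\ fa a q = 0 by apply: ex10; rewrite // eq_sym.
apply/setP => g; apply/setIP/imsetP => [[/imsetP[v _ ->] /imsetP[u _ E]]|[v Hv ->]].
  have Euv : u = v by move/permP: E => /(_ 0); rewrite gperm0 permE add0r.
  subst u; exists v => //.
  have H0 : forall x, Bf a b v x = 0.
    move=> x; apply: (scale_F2_eq0 Hd); move/permP: E => /(_ x).
    rewrite gpermE permE dd_valid // => H.
    by apply: (addrI (x + v)); rewrite addr0.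
  move: (H0 p) (H0 q); rewrite inE /Bf Pa Pb Qa Qb !mulr0 !mulr1 add0r addr0 => -> ->.
  by rewrite !eqxx.
move: Hv; rewrite inE => /andP[/eqP Hva /eqP Hvb].
have -> : transl v = gperm a b d v.
  by apply/permP => x; rewrite gpermE permE /Bf Hva Hvb !mul0r addr0 scale0r addr0.
split; apply/imsetP; exists v; rewrite ?inE //.
by apply/permP => x; rewrite gpermE permE /Bf Hva Hvb !mul0r addr0 scale0r addr0.
Qed.

Lemma FG_index n (a b : 'cV_n) d : (2 <= n)%N -> valid (a, b, d) ->
  #|transl_group n : FG a b d :&: transl_group n|%g = 4%N.
Proof.
move=> hn Hv; have := Lagrange (subsetIr (FG a b d) (TG n)).
rewrite /= FGT // !card_imset; try exact: transl_inj.
case/and5P: Hv => Ha Hb Hab _ _.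
have E2 : (2 ^ n = 2 ^ (n - 2) * 4)%N by rewrite -{1}(subnK hn) expnD.
rewrite cardsT cardV cardK // E2 => /eqP.
by rewrite eqn_mul2l expn_eq0 /= => /eqP.
Qed.
Ltac c2 := apply/matrixP => ? ?; rewrite !mxE; f2.

Lemma V2mv n (a b c : V n) : a + b = c -> a = c + b.
Proof. by move=> <-; c2. Qed.

Lemma lin_rep n (f : V n -> 'F_2) : (forall x y, f (x + y) = f x + f y) ->
  exists a : 'cV_n, forall x, fa a x = f x.
Proof.
move=> fD; exists (\col_i f (delta_mx 0 i)) => x.
have f0 : f 0 = 0 by apply: (addrI (f 0)); rewrite -fD !addr0.
rewrite {1 2}(row_sum_delta x).
rewrite (big_morph (fa _) (faD _) (fa0 _)) (big_morph f fD f0).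
apply: eq_bigr => j _; rewrite faZ fa_delta mxE.
by case: (F2c (x 0 j)) => ->; rewrite ?scale0r ?scale1r ?mul0r ?mul1r ?f0.
Qed.

Lemma classify n (R : {group {perm V n}}) : (2 < n)%N ->
  abelem 2 R -> regular_on R -> #|transl_group n : R :&: transl_group n|%g = 4%N ->
  exists t, valid t /\ R = FG t.1.1 t.1.2 t.2.
Proof.
move=> hn /abelemP -/(_ isT) [/centsP Rab Rsq] /andP[Rtr /forallP Rst] Hidx.
have Rcomm : forall r s, r \in R -> s \in R -> (r * s = s * r)%g.
  by move=> r s Hr Hs; apply: (Rab _ Hr).
have Rinv : forall r x, r \in R -> r (r x) = x.
  by move=> r x Hr; have := Rsq r Hr; rewrite expgS expg1 => H; rewrite -permM H perm1.
have Rorb : orbit 'P R 0 = setT by apply: (atransP Rtr); rewrite inE.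
pose rr (v : V n) : {perm V n} := odflt 1%g [pick r in R | r 0 == v].
have rr_spec : forall v, rr v \in R /\ rr v 0 = v.
  move=> v; have : v \in orbit 'P R 0 by rewrite Rorb inE.
  case/orbitP => r Hr Hrv; have {}Hrv : r 0 = v by exact: Hrv.
  rewrite /rr; case: pickP => [s /andP[Hs /eqP Hsv] | /(_ r)] /=.
    by [].
  by rewrite Hr Hrv eqxx.
have rr_uniq : forall r, r \in R -> rr (r 0) = r.
  move=> r Hr; have [H1 H2] := rr_spec (r 0).
  have : (rr (r 0) * r^-1)%g \in ('C_R[0 | 'P])%g.
    rewrite inE groupM ?groupV //=; apply/astab1P; rewrite /= apermE permM H2.
    by rewrite -permM mulgV perm1.
  rewrite (eqP (Rst 0)) inE -eq_mulgV1 => /eqP //.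
have rrR : forall v, rr v \in R by move=> v; case: (rr_spec v).
have rr0 : forall v, rr v 0 = v by move=> v; case: (rr_spec v).
have rr_id : rr 0 = 1%g by rewrite -{1}(perm1 0) rr_uniq.
have rrC : forall u v x, rr v (rr u x) = rr (rr v u) x.
  move=> u v x; have := rr_uniq _ (groupM (rrR u) (rrR v)).
  by rewrite permM rr0 => ->; rewrite permM.
have rrS : forall u v, rr v u = rr u v.
  move=> u v; have E1 := rr_uniq _ (groupM (rrR u) (rrR v)).
  have E2 := rr_uniq _ (groupM (rrR v) (rrR u)).
  rewrite permM rr0 in E1; rewrite permM rr0 in E2.
  by rewrite -{1}(rr0 (rr v u)) E1 Rcomm ?rrR // -E2 rr0.
have rrI : forall v x, rr v (rr v x) = x by move=> v x; apply: Rinv.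
pose W := [set w : V n | transl w \in R].
have tr0 : transl (0 : V n) = 1%g by apply/permP => x; rewrite perm1 permE addr0.
have trM : forall u v : V n, transl (u + v) = (transl u * transl v)%g.
  by move=> u v; apply/permP => x; rewrite permM !permE addrA.
have HW : addcl W.
  split; first by rewrite inE tr0 group1.
  by move=> x y; rewrite !inE trM; apply: groupM.
have rrW : forall w, w \in W -> rr w = transl w.
  by move=> w; rewrite inE => Hw; rewrite -{1}(add0r w) -{1}(permE (addIr w) 0) rr_uniq.
have F1 : forall v x w, w \in W -> rr v (x + w) = rr v x + w.
  move=> v x w; rewrite inE => Hw.
  have := Rcomm _ _ Hw (rrR v); move/permP => /(_ x); rewrite !permM !permE //.
have F2 : forall v x w, w \in W -> rr (v + w) x = rr v x + w.
  move=> v x w; rewrite inE => Hw.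
  have := rr_uniq _ (groupM (rrR v) Hw); rewrite permM rr0 permE => ->.
  by rewrite permM permE.
have RT : R :&: transl_group n = [set transl w | w in W].
  apply/setP => g; apply/setIP/imsetP => [[Hg /imsetP[v _ Ev]]|[w Hw ->]].
    by exists v; rewrite // inE -Ev.
  by split; [rewrite inE in Hw | apply/imsetP; exists w; rewrite ?inE].
have E2 : (2 ^ n = 2 ^ (n - 2) * 4)%N by rewrite -{1}(subnK (ltnW hn)) expnD.
have cardW : #|W| = (2 ^ (n - 2))%N.
  have L := Lagrange (subsetIr R (TG n)); rewrite /= in L.
  rewrite Hidx RT card_imset ?card_T in L; last exact: transl_inj.
  by move: L; rewrite E2 => /eqP; rewrite eqn_mul2r /= => /eqP.
have cover : forall p q, p \notin W -> q \notin W -> p + q \notin W ->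
    forall y, [|| y \in W, y + p \in W, y + q \in W | y + (p + q) \in W].
  move=> p q Hp Hq Hpq y.
  have := cos4_card HW Hp Hq Hpq; rewrite cardW => Hc.
  have : cos W 0 :|: cos W p :|: cos W q :|: cos W (p + q) = setT.
    apply/eqP; rewrite eqEcard subsetT cardsT cardV Hc.
    by rewrite E2 mulnC leqnn.
  by move/setP => /(_ y); rewrite !inE addr0 -!orbA.
have inj_cls : forall v x y, rr v x + rr v y \in W -> x + y \in W.
  move=> v x y H.
  have E : rr v (y + (rr v x + rr v y)) = rr v x by rewrite F1 //; c2.
  have := perm_inj E => <-.
  by have -> : y + (rr v x + rr v y) + y = rr v x + rr v y by c2.
have rrvv : forall v, rr v v = 0 by move=> v; have := rrI v 0; rewrite rr0.
have W0 := HW.1.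
have DW : forall v x, rr v x + x + v \in W.
  move=> v x.
  case: (boolP (v \in W)) => Hv.
    by rewrite rrW // permE; have -> : x + v + x + v = 0 by c2.
  case: (boolP (x \in W)) => Hx.
    by rewrite -(add0r x) F1 // rr0; have -> : v + x + (0 + x) + v = 0 by c2.
  case: (boolP (x + v \in W)) => Hxv.
    have -> : x = v + (x + v) by c2.
    by rewrite F1 // rrvv; have -> : 0 + (x + v) + (v + (x + v)) + v = 0 by c2.
  have Hvx : v + x \notin W by rewrite addrC.
  case/or4P: (cover v x Hv Hx Hvx (rr v x)) => H.
  - case/negP: Hxv; apply: (inj_cls v); by rewrite rrvv addr0.
  - case/negP: Hx; rewrite -(addr0 x); apply: (inj_cls v); by rewrite rr0.
  - case/negP: Hv; rewrite -(addr0 v); apply: (inj_cls x); by rewrite rr0 -rrS.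
  - by rewrite -addrA (addrC x).
pose D v x := rr v x + x + v.
have D0l : forall x, D 0 x = 0 by move=> x; rewrite /D rr_id perm1; c2.
have D0r : forall v, D v 0 = 0 by move=> v; rewrite /D rr0; c2.
have Dsym : forall v x, D v x = D x v by move=> v x; rewrite /D rrS; c2.
have Dinv : forall v x, D v (x + v) = D v x.
  move=> v x; have E0 : rr v x = (x + v) + D v x by rewrite /D; c2.
  have E1 : rr v (x + v) + D v x = x.
    rewrite -F1; last exact: DW.
    by rewrite -E0 rrI.
  by rewrite {1}/D (V2mv E1) /D; c2.
have Dvv : forall v, D v v = 0 by move=> v; rewrite -{2}(add0r v) Dinv D0r.
have DclR : forall v x w, w \in W -> D v (x + w) = D v x.
  by move=> v x w Hw; rewrite /D F1 //; c2.
have DclL : forall v x w, w \in W -> D (v + w) x = D v x.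
  by move=> v x w Hw; rewrite /D F2 //; c2.
have Dcls : forall v x v' x', v + v' \in W -> x + x' \in W -> D v x = D v' x'.
  move=> v x v' x' Hv Hx.
  have -> : v = v' + (v + v') by c2.
  have -> : x = x' + (x + x') by c2.
  by rewrite DclL // DclR.
have W2pos : (0 < 2 ^ (n - 2))%N by rewrite expn_gt0.
have [p Hp] : exists p, p \notin W.
  case: (boolP [exists p, p \notin W]) => [/existsP //|/existsP H].
  have : W = setT.
    by apply/setP => y; rewrite [in RHS]inE; apply/idP/negPn/negP => Hy; apply: H; exists y.
  move/(congr1 (fun A : {set V n} => #|A|)); rewrite cardW cardsT cardV E2.
  lia.
have [q [Hq Hqp]] : exists q, q \notin W /\ q + p \notin W.
  case: (boolP [exists q, (q \notin W) && (q + p \notin W)]) => [/existsP [q /andP[H1 H2]]|/existsP H].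
    by exists q.
  have : cos W 0 :|: cos W p = setT.
    apply/setP => y; rewrite !inE addr0; apply/negPn/negP; rewrite negb_or => Hy.
    by apply: H; exists y; rewrite !inE.
  move/(congr1 (fun A : {set V n} => #|A|)) => HC.
  have := cardsUI (cos W 0) (cos W p); rewrite HC !card_cos cardW cardsT cardV E2.
  lia.
have Hpq : p + q \notin W by rewrite addrC.
pose kap (y : V n) : 'F_2 * 'F_2 :=
  odflt (0, 0) [pick st : 'F_2 * 'F_2 | y + st.1 *: p + st.2 *: q \in W].
have kap_spec : forall y, y + (kap y).1 *: p + (kap y).2 *: q \in W.
  move=> y; rewrite /kap; case: pickP => [st //|H0].
  case/or4P: (cover p q Hp Hq Hpq y) => H.
  - by move: (H0 (0, 0)); rewrite /= !scale0r !addr0 H.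
  - by move: (H0 (1, 0)); rewrite /= scale1r scale0r addr0 H.
  - by move: (H0 (0, 1)); rewrite /= scale1r scale0r addr0 H.
  - by move: (H0 (1, 1)); rewrite /= !scale1r -addrA H.
have nzW : forall s t : 'F_2, s *: p + t *: q \in W -> s = 0 /\ t = 0.
  move=> s t; case: (F2c s) => ->; case: (F2c t) => ->;
    rewrite ?scale0r ?scale1r ?addr0 ?add0r => H //.
  - by move: Hq; rewrite H.
  - by move: Hp; rewrite H.
  - by move: Hpq; rewrite H.
have F2eq : forall s s' : 'F_2, s + s' = 0 -> s = s'.
  by move=> s s' H; rewrite -[s]addr0 -H; f2.
have kap_uniq : forall y s t, y + s *: p + t *: q \in W -> kap y = (s, t).
  move=> y s t H.
  have := HW.2 _ _ (kap_spec y) H.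
  have -> : y + (kap y).1 *: p + (kap y).2 *: q + (y + s *: p + t *: q)
     = ((kap y).1 + s) *: p + ((kap y).2 + t) *: q by c2.
  case/nzW => /F2eq H1 /F2eq H2.
  by rewrite -H1 -H2; case: (kap y).
have kapD : forall x y, kap (x + y) = ((kap x).1 + (kap y).1, (kap x).2 + (kap y).2).
  move=> x y; apply: kap_uniq.
  have := HW.2 _ _ (kap_spec x) (kap_spec y).
  by have -> : x + (kap x).1 *: p + (kap x).2 *: q + (y + (kap y).1 *: p + (kap y).2 *: q)
     = x + y + ((kap x).1 + (kap y).1) *: p + ((kap x).2 + (kap y).2) *: q by c2.
have [|a Ha] := @lin_rep n (fun y => (kap y).1).
  by move=> x y /=; rewrite kapD.
have [|b Hb] := @lin_rep n (fun y => (kap y).2).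
  by move=> x y /=; rewrite kapD.
have kapW : forall w, w \in W -> kap w = (0, 0).
  by move=> w Hw; apply: kap_uniq; rewrite !scale0r !addr0.
have kapp : kap p = (1, 0).
  by apply: kap_uniq; have -> : p + 1 *: p + 0 *: q = 0 by c2.
have kapq : kap q = (0, 1).
  by apply: kap_uniq; have -> : q + 0 *: p + 1 *: q = 0 by c2.
pose d := D p q.
have dW : d \in W by exact: DW.
have table : forall s t s' t' : 'F_2,
    D (s *: p + t *: q) (s' *: p + t' *: q) = (s * t' + t * s') *: d.
  move=> s t s' t'.
  case: (F2c s) => ->; case: (F2c t) => ->; case: (F2c s') => ->; case: (F2c t') => ->;
  rewrite ?scale0r ?scale1r ?addr0 ?add0r ?mul0r ?mul1r ?addr0 ?add0r ?F2two ?scale0r ?scale1r;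
  first [ by rewrite ?D0l ?D0r ?Dvv | by [] | by rewrite Dsym
        | by rewrite (addrC p q) Dinv | by rewrite Dinv Dsym
        | by rewrite Dsym (addrC p q) Dinv | by rewrite Dsym Dinv Dsym ].
have Dform : forall v x, D v x = Bf a b v x *: d.
  move=> v x.
  rewrite (Dcls v x ((kap v).1 *: p + (kap v).2 *: q) ((kap x).1 *: p + (kap x).2 *: q)).
  - by rewrite table /Bf !Ha !Hb.
  - by rewrite addrA; exact: kap_spec.
  - by rewrite addrA; exact: kap_spec.
have dd_d : dd a b d = d by rewrite dd_valid // ?Ha ?Hb kapW.
have rr_g : forall v, rr v = gperm a b d v.
  move=> v; apply/permP => x; rewrite gpermE dd_d -Dform /D; c2.
have dnz : d != 0.
  apply/eqP => d0; move: Hp; rewrite inE.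
  suff E : rr p = transl p by rewrite -E rrR.
  apply/permP => x; rewrite permE rr_g gpermE dd_d d0 scaler0 addr0 //.
have Ha0 : a != 0 by apply/eqP => a0; move: (Ha p); rewrite a0 fa0c kapp.
have Hb0 : b != 0 by apply/eqP => b0; move: (Hb q); rewrite b0 fa0c kapq.
have Hab : a != b by apply/eqP => ab; move: (Ha p); rewrite ab Hb kapp.
exists (a, b, d); split.
  by rewrite /valid /= Ha0 Hb0 Hab dnz !Ha !Hb kapW.
apply/val_inj/setP => g /=; apply/idP/imsetP => [Hg|[v _ ->]].
  by exists (g 0); rewrite ?inE // -rr_g rr_uniq.
by rewrite -rr_g.
Qed.
Lemma scale_F2_inj n (s t : 'F_2) (d : V n) : d != 0 -> s *: d = t *: d -> s = t.
Proof.
move=> Hd; case: (F2c s) => ->; case: (F2c t) => -> //.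
- by rewrite scale0r scale1r => /esym/eqP; rewrite (negbTE Hd).
- by rewrite scale0r scale1r => /eqP; rewrite (negbTE Hd).
Qed.

Definition tripA n (a b : 'cV['F_2]_n) : {set 'cV['F_2]_n} := [set a; b; a + b].

Lemma fiber_fwd n (a b a' b' : 'cV_n) (d d' : V n) :
  valid (a, b, d) -> valid (a', b', d') -> FG a' b' d' = FG a b d ->
  [/\ d' = d, a' \in tripA a b, b' \in tripA a b & a' != b'].
Proof.
case/and5P => Ha Hb Hab Hd /andP[/eqP Hda /eqP Hdb].
case/and5P => Ha' Hb' Hab' Hd' /andP[/eqP Hda' /eqP Hdb'] E.
have EB : forall v x, Bf a' b' v x *: d' = Bf a b v x *: d.
  move=> v x.
  have : gperm a' b' d' v \in FG a b d by rewrite -E; apply/imsetP; exists v; rewrite ?inE.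
  case/imsetP => u _ Eu.
  have Euv : u = v by rewrite -(gperm0 a b d u) -Eu gperm0.
  subst u; move/permP: Eu => /(_ x); rewrite !gpermE !dd_valid //.
  by rewrite -!addrA => /addrI /addrI.
have [p [Pa Pb]] := ex10 Ha Hab.
have [q [Qb Qa]] : exists q, fa b q = 1 /\ fa a q = 0 by apply: ex10; rewrite // eq_sym.
have Bpq : Bf a b p q = 1 by rewrite /Bf Pa Pb Qa Qb; f2.
have Hdd : d' = d.
  have := EB p q; rewrite Bpq scale1r.
  case: (F2c (Bf a' b' p q)) => ->; first by rewrite scale0r => E0; move: Hd; rewrite -E0 eqxx.
  by rewrite scale1r.
subst d'.
have EB' : forall v x, Bf a' b' v x = Bf a b v x.
  by move=> v x; apply: (scale_F2_inj Hd); apply: EB.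
have memA : forall c (v : V n), c != 0 -> (forall x, fa c x = Bf a b v x) -> c \in tripA a b.
  move=> c v Hc Hcv.
  have Ec : c = fa a v *: b + fa b v *: a.
    by apply: fa_inj => x; rewrite Hcv faDc !faZc /Bf.
  rewrite !inE; move: Hc; rewrite Ec.
  case: (F2c (fa a v)) => ->; case: (F2c (fa b v)) => ->;
    by rewrite ?scale0r ?scale1r ?addr0 ?add0r ?(addrC b a) ?eqxx ?orbT.
split => //.
- have [v [Vb Va]] : exists v, fa b' v = 1 /\ fa a' v = 0 by apply: ex10; rewrite // eq_sym.
  apply: (memA a' v Ha') => x; rewrite -EB' /Bf Va Vb; f2.
- have [v [Va Vb]] := ex10 Ha' Hab'.
  apply: (memA b' v Hb') => x; rewrite -EB' /Bf Va Vb; f2.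
Qed.
Lemma MMxx m k (u : 'M['F_2]_(m, k)) : u + u = 0.
Proof. apply/matrixP => i j; rewrite !mxE; f2. Qed.
Lemma addM_eq0 m k (u w : 'M['F_2]_(m, k)) : (u + w == 0) = (u == w).
Proof.
by rewrite addr_eq0; have -> : - w = w by apply/eqP; rewrite eq_sym -addr_eq0 MMxx.
Qed.

Lemma fiber_bwd n (a b a' b' : 'cV_n) (d : V n) :
  valid (a, b, d) -> a' \in tripA a b -> b' \in tripA a b -> a' != b' ->
  valid (a', b', d) /\ FG a' b' d = FG a b d.
Proof.
move=> Hv; have := Hv; case/and5P => Ha Hb Hab Hd /andP[/eqP Hda /eqP Hdb] /= Ha' Hb' Hab'.
have nzA : forall c, c \in tripA a b -> c != 0.
  by move=> c; rewrite !inE => /orP[/orP[/eqP->|/eqP->]|/eqP->] //; rewrite addM_eq0.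
have dA : forall c, c \in tripA a b -> fa c d = 0.
  by move=> c; rewrite !inE => /orP[/orP[/eqP->|/eqP->]|/eqP->] //; rewrite faDc Hda Hdb addr0.
have EB : forall v x, Bf a' b' v x = Bf a b v x.
  move=> v x; move: Ha' Hb' Hab'; rewrite !inE.
  by case/orP => [/orP[/eqP->|/eqP->]|/eqP->]; case/orP => [/orP[/eqP->|/eqP->]|/eqP->];
    rewrite ?eqxx // => _; rewrite /Bf ?faDc; f2.
split.
  by rewrite /valid /= !nzA // Hab' Hd !dA.
apply/val_inj => /=; apply: eq_imset => v; apply/permP => x.
by rewrite !gpermE EB (dd_valid (dA _ Ha') (dA _ Hb')) (dd_valid Hda Hdb).
Qed.
Definition Ftr n (t : 'cV['F_2]_n * 'cV['F_2]_n * V n) : {group {perm V n}} :=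
  FG t.1.1 t.1.2 t.2.

Lemma card_tripA n (a b : 'cV['F_2]_n) : a != 0 -> b != 0 -> a != b -> #|tripA a b| = 3%N.
Proof.
move=> Ha Hb Hab; rewrite /tripA setUC.
have e1 : (a + b == a) = (b == 0) by rewrite -{2}(addr0 a) (inj_eq (addrI a)).
have e2 : (a + b == b) = (a == 0) by rewrite -{2}(add0r b) (inj_eq (addIr b)).
by rewrite cardsU1 cards2 Hab !inE negb_or e1 e2 Ha Hb.
Qed.

Lemma fiber_card n (t : 'cV['F_2]_n * 'cV['F_2]_n * V n) : valid t ->
  #|[set t' | valid t' && (Ftr t' == Ftr t)]| = 6%N.
Proof.
case: t => [[a b] d] Hv.
pose A := tripA a b.
pose P6 := setX A A :\: [set (c, c) | c in A].
have -> : [set t' | valid t' && (Ftr t' == Ftr (a, b, d))] = [set (ab, d) | ab in P6].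
  apply/setP => [[[a' b'] d']]; rewrite inE; apply/andP/imsetP.
    move=> [Hv' /eqP E]; have [-> HA HB Hne] := fiber_fwd Hv Hv' E.
    exists (a', b') => //; rewrite in_setD in_setX HA HB /= andbT; apply/negP; case/imsetP => c _ [E1 E2].
    by move: Hne; rewrite E1 E2 eqxx.
  case=> [[a'' b''] H [-> -> ->]].
  move: H; rewrite in_setD in_setX => /andP[Hnd /andP[HA HB]].
  have Hne : a'' != b''.
    apply: contra Hnd => /eqP E; apply/imsetP; exists a'' => //; by rewrite E.
  have [V1 V2] := fiber_bwd Hv HA HB Hne.
  by split => //; apply/eqP.
rewrite card_imset; last by move=> x y [].
case/and5P: Hv => Ha Hb Hab _ _.
rewrite cardsD cardsX card_tripA //.
have -> : setX A A :&: [set (c, c) | c in A] = [set (c, c) | c in A].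
  apply/setIidPr/subsetP => _ /imsetP[c Hc ->]; by rewrite in_setX Hc.
by rewrite card_imset ?card_tripA // => x y [].
Qed.
Lemma sum_const_cond (T : finType) (P : pred T) c :
  (\sum_(i | P i) c)%N = (#|[set i | P i]| * c)%N.
Proof.
rewrite -sum1dep_card; elim/big_rec2: _ => //= i x y _ ->.
by rewrite mulnDl mul1n.
Qed.

Lemma card_nz n : #|[set a : 'cV['F_2]_n | a != 0]| = (2 ^ n - 1)%N.
Proof.
have := cardsD1 0 [set: 'cV['F_2]_n]; rewrite cardsT cardC inE => ->.
rewrite add1n subSS subn0; apply: eq_card => a; by rewrite !inE andbT.
Qed.

Lemma card_nz2 n (a : 'cV['F_2]_n) : a != 0 ->
  #|[set b : 'cV['F_2]_n | (b != 0) && (a != b)]| = (2 ^ n - 2)%N.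
Proof.
move=> Ha.
have := cardsD1 0 [set: 'cV['F_2]_n]; rewrite cardsT cardC inE.
rewrite (cardsD1 a ([set: 'cV['F_2]_n] :\ 0)) !inE Ha => ->.
rewrite !add1n subSS subSS subn0.
by apply: eq_card => b; rewrite !inE andbT (eq_sym a) andbC.
Qed.

Lemma card_trip n : (2 <= n)%N ->
  #|[set t : 'cV['F_2]_n * 'cV['F_2]_n * V n | valid t]| =
  ((2 ^ n - 1) * (2 ^ n - 2) * (2 ^ (n - 2) - 1))%N.
Proof.
move=> hn.
rewrite -sum1dep_card.
rewrite (eq_bigl (fun t => ((t.1.1 != 0) && ((t.1.2 != 0) && (t.1.1 != t.1.2))) &&
                   (t.2 \in Kset t.1.1 t.1.2 :\ 0))); last first.
  by case=> [[a b] d]; rewrite /valid /= !inE !andbA.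
rewrite -(pair_big_dep (fun ab => (ab.1 != 0) && ((ab.2 != 0) && (ab.1 != ab.2)))
            (fun ab d => d \in Kset ab.1 ab.2 :\ 0) (fun _ _ => 1%N)) /=.
rewrite (eq_bigr (fun _ => (2 ^ (n - 2) - 1)%N)); last first.
  move=> [a b] /= /andP[Ha /andP[Hb Hab]].
  rewrite sum1_card.
  have := cardsD1 0 (Kset a b); rewrite cardK // inE !fa0 eqxx /= => ->.
  by rewrite add1n subSS subn0.
rewrite sum_const_cond -sum1dep_card.
rewrite -(pair_big_dep (fun a => a != 0) (fun a b => (b != 0) && (a != b)) (fun _ _ => 1%N)) /=.
rewrite (eq_bigr (fun _ => (2 ^ n - 2)%N)); last first.
  by move=> a Ha; rewrite sum1dep_card card_nz2.
by rewrite sum_const_cond card_nz.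
Qed.
Local Close Scope ring_scope.
Theorem mainTheorem9 (n : nat) (hn : 2 < n) :
  #|[set R : {group {perm V n}} |
      [&& abelem 2 R, regular_on R & (#|transl_group n : R :&: transl_group n|)%g == 4]]|
  = ((2 ^ (n - 2) - 1) * (2 ^ (n - 1) - 1) * (2 ^ n - 1)) %/ 3.
Proof.
set S := [set R : {group {perm V n}} | _].
pose Trip := [set t : 'cV['F_2]_n * 'cV['F_2]_n * V n | valid t].
have hn2 : (2 <= n)%N by apply: ltnW.
have ES : S = [set Ftr t | t in Trip].
  apply/setP => R; rewrite inE; apply/idP/imsetP.
    case/and3P => H1 H2 /eqP H3; have [t [Ht ->]] := classify hn H1 H2 H3.
    by exists t; rewrite ?inE.
  case=> [[[a b] d]]; rewrite inE => Hv ->.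
  by rewrite /Ftr /= FG_abelem FG_regular FG_index.
have Hc : #|Trip| = (#|S| * 6)%N.
  rewrite -sum1_card (partition_big_imset (@Ftr n)) /= -ES.
  rewrite -sum_nat_const; apply: eq_bigr => R; rewrite ES => /imsetP[t0 Ht0 ->].
  rewrite -(fiber_card (t := t0)); last by rewrite inE in Ht0.
  rewrite -sum1dep_card; apply: eq_bigl => t; by rewrite inE.
have := card_trip hn2; rewrite Hc.
have E1 : (2 ^ n - 2 = 2 * (2 ^ (n - 1) - 1))%N.
  by rewrite mulnBr muln1 -expnS; have -> : (n - 1).+1 = n by lia.
rewrite E1 => H.
have H3 : (#|S| * 3 = (2 ^ (n - 2) - 1) * (2 ^ (n - 1) - 1) * (2 ^ n - 1))%N.
  apply/eqP; rewrite -(eqn_pmul2l (isT : (0 < 2)%N)); apply/eqP.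
  rewrite mulnA (mulnC 2 #|S|) -mulnA /= H; ring.
by rewrite -H3 mulnK.
Qed.
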